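(* Let $\langle R,<,+,\cdot\rangle$ be an ordered field, and let $E\subseteq R^2\times R^2$ be the relation $E(x,y,a,b)\iff y=ax+b$. Let $m\in R_{\ge0}$. Then $|E\cap B|=\Omega(n^{4/3})$ for finite $m$-distant $n$-grids $B\subseteq R^2\times R^2$; that is, there is a constant $c>0$ such that for arbitrarily large $n\in\mathbb N$ there is an $m$-distant $n$-grid $B=B_1\times B_2\subseteq R^2\times R^2$ with $|E\cap B|\ge c\,n^{4/3}$.
   Context: For $x\in R^2$, $|x|=\max(|x_1|,|x_2|)$. A set $X\subseteq R^2$ is $m$-distant if $|x-y|>m$ for all distinct $x,y\in X$. An $n$-grid in $R^2\times R^2$ is $B=B_1\times B_2$ with $B_1,B_2\subseteq R^2$ and $|B_1|=|B_2|=n$; it is $m$-distant if $B_1$ and $B_2$ are $m$-distant. *)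

(* Defs.v *)
From HB Require Import structures.
From mathcomp Require Import all_boot all_order all_algebra.
From mathcomp Require Export finmap.
Set Implicit Arguments. Unset Strict Implicit. Unset Printing Implicit Defensive.
Import Order.TTheory GRing.Theory Num.Theory.
Local Open Scope ring_scope.
Local Open Scope fset_scope.

Definition supdist (R : realFieldType) (x y : R * R) : R :=
  Num.max `|x.1 - y.1| `|x.2 - y.2|.

Definition m_distant (R : realFieldType) (m : R) (X : {fset R * R}) : Prop :=
  forall x y, x \in X -> y \in X -> x != y -> m < supdist x y.

Definition E_rel (R : realFieldType) (p q : R * R) : bool :=
  p.2 == (q.1 * p.1 + q.2)%R.

Definition E_count (R : realFieldType) (B1 B2 : {fset R * R}) : nat :=
  #|` [fset pq in B1 `*` B2 | E_rel pq.1 pq.2] |.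

(* Main.v *)
Require Import Defs.
From HB Require Import structures.
From mathcomp Require Import all_boot all_order all_algebra finmap.
From mathcomp Require Import ring lra zify.
Import Order.TTheory GRing.Theory Num.Theory.
Local Open Scope ring_scope.
Local Open Scope fset_scope.

Lemma card_im (T:finType) (K:choiceType) (f : T -> K) :
  injective f -> #|` f @` [fset x in (predT : pred T)]| = #|T|.
Proof.
move=> fi. rewrite card_imfset //= -card_fset card_imfset //= -card_finset.
by rewrite card_imfset.
Qed.

Lemma final_ineq (k c : nat) : (k^4 <= c)%N ->
  (1/4 : rat) ^+ 3 * ((k * (2 * k^2))%N%:R) ^+ 4 <= (c%:R : rat) ^+ 3.
Proof.
move=> hc.
apply: (@le_trans _ _ (((k^4)%N)%:R ^+3)).
  rewrite !natrM. set x : rat := k%:R. have x0 : 0 <= x ^+ 12 by rewrite exprn_ge0 // ler0n.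
  set L := (X in X <= _). set M := (X in _ <= X).
  have -> : L = x ^+12 / 4 by rewrite /L; field.
  have -> : M = x ^+12 by rewrite /M; ring.
  lra.
by rewrite lerXn2r ?nnegrE ?ler0n // ler_nat.
Qed.

Section Constr.
Variables (R : realFieldType) (m : R).
Hypothesis hm : 0 <= m.

Definition s : R := m + 1.
Definition g (p : nat * nat) : R * R := (s * p.1%:R, s ^+ 2 * p.2%:R).

Lemma s_gt0 : 0 < s. Proof. by move: hm; rewrite /s; lra. Qed.
Lemma s_gtm : m < s. Proof. by move: hm; rewrite /s; lra. Qed.
Lemma s_le_s2 : s <= s ^+ 2.
Proof. rewrite expr2 ler_peMr ?(ltW s_gt0) // /s; move: hm; lra. Qed.

Lemma g_inj : injective g.
Proof.
move=> [a b] [c d] [] /= h1 h2.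
have s0 : s != 0 by rewrite gt_eqF // s_gt0.
have s20 : s ^+ 2 != 0 by rewrite expf_neq0.
have e1 := mulfI s0 h1.
have e2 := mulfI s20 h2.
have /eqP := e1. rewrite (eqr_nat R a c) => /eqP ->.
have /eqP := e2. rewrite (eqr_nat R b d) => /eqP -> //.
Qed.

Lemma nat_dist (i j : nat) : i != j -> 1 <= `|i%:R - j%:R : R|.
Proof.
case: (ltngtP i j) => // h _.
  rewrite distrC -(natrB R (ltnW h)) ger0_norm ?ler0n // ler1n subn_gt0 //.
rewrite -(natrB R (ltnW h)) ger0_norm ?ler0n // ler1n subn_gt0 //.
Qed.

Lemma g_dist p q : p != q -> m < supdist (g p) (g q).
Proof.
move: p q => [a b] [c d] /= ne; rewrite /supdist /g /=.
have s0 := ltW s_gt0.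
have s20 := exprn_ge0 2 s0.
have [ac|ac] := eqVneq a c.
  subst c; have bd : b != d by apply: contraNneq ne => ->.
  apply: (lt_le_trans s_gtm); apply: (le_trans s_le_s2).
  rewrite le_max; apply/orP; right.
  by rewrite -mulrBr normrM (ger0_norm s20) ler_peMr // nat_dist.
apply: (lt_le_trans s_gtm).
rewrite le_max; apply/orP; left.
by rewrite -mulrBr normrM (ger0_norm s0) ler_peMr // nat_dist.
Qed.

Lemma im_distant (T : finType) (f : T -> nat * nat) :
  m_distant m ((g \o f) @` [fset x in (predT : pred T)]).
Proof.
move=> x y /imfsetP [a _ ->] /imfsetP [b _ ->] ne.
apply: g_dist; apply: contraNneq ne => /= ->; by [].
Qed.

End Constr.

(* |E ∩ B| >= c n^(4/3)  is stated as  |E ∩ B|^3 >= c^3 n^4  (c > 0 rational). *)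
Theorem proposition3p15 (R : realFieldType) (m : R) (hm : 0 <= m) :
  exists c : rat, 0 < c /\
    forall N : nat, exists n : nat, (N <= n)%N /\
      exists B1 B2 : {fset R * R},
        #|` B1| = n /\ #|` B2| = n /\ m_distant m B1 /\ m_distant m B2 /\
        c ^+ 3 * (n%:R) ^+ 4 <= ((E_count B1 B2)%:R : rat) ^+ 3.
Proof.
exists (1/4); split; first by [].
move=> N; set k := N.+1.
pose T1 := ('I_k * 'I_(2 * k^2))%type.
pose f1 := fun x : T1 => (val x.1, val x.2).
pose B := (@g R m \o f1) @` [fset x in (predT : pred T1)].
have f1i : injective (@g R m \o f1).
  move=> [a b] [c d] /= /(@g_inj R m hm) [] /val_inj -> /val_inj -> //.
have cB : #|` B| = (k * (2 * k^2))%N by rewrite card_im // card_prod !card_ord.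
exists (k * (2 * k^2))%N; split.
  by apply: (leq_trans (leqnSn N)); rewrite /k leq_pmulr // muln_gt0 expn_gt0.
exists B, B; split; first exact: cB. split; first exact: cB.
split; first exact: (@im_distant R m hm).
split; first exact: (@im_distant R m hm).
apply: final_ineq.
pose T3 : finType := ('I_k * 'I_k * 'I_(k^2))%type.
pose h := fun t : T3 => (@g R m (val t.1.1, (val t.1.2 * val t.1.1 + val t.2)%N),
                         @g R m (val t.1.2, val t.2)).
have hi : injective h.
  move=> [[i a] b] [[i' a'] b'] E.
  have E1 := f_equal fst E; have E2 := f_equal snd E; rewrite /h /= in E1 E2.
  have := @g_inj R m hm _ _ E1 => -[] e1 _. have := @g_inj R m hm _ _ E2 => -[] e2 e3.
  by move/val_inj: e1 => ->; move/val_inj: e2 => ->; move/val_inj: e3 => ->.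
have -> : (k ^ 4 = #|T3|)%N by rewrite !card_prod !card_ord; lia.
rewrite -(@card_im T3 _ h hi) /E_count; apply: fsubset_leq_card.
apply/fsubsetP => x /imfsetP [[[i a] b] _ ->] /=.
rewrite !inE /=.
have hab : (a * i + b < 2 * k ^ 2)%N.
  have := ltn_ord a; have := ltn_ord i; have := ltn_ord b; rewrite /k; nia.
have hb : (b < 2 * k ^ 2)%N.
  have := ltn_ord b; rewrite /k; lia.
apply/andP; split; first (apply/andP; split).
- by apply/imfsetP; exists (i, Ordinal hab); last by []; rewrite !inE.
- by apply/imfsetP; exists (a, Ordinal hb); last by []; rewrite !inE.
- rewrite /E_rel /g /=; apply/eqP; rewrite natrD natrM; ring.
Qed.
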